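(* Let $\mathcal{A}=(S,\mathcal{P}_1,\dots,\mathcal{P}_n)$ be an Aumann structure and let $\mathbf{C}(\mathcal{A})=(\mathcal{P}(S),\sqsubseteq,(K_i)_{i\in\{1,\dots,n\}})$ be its induced spatial constraint system, with distributed spaces $(\Delta_I)_{I\subseteq\{1,\dots,n\}}$. Then $\Delta_I=D_I$ for every $I\subseteq\{1,\dots,n\}$.
   Context: An Aumann structure $(S,\mathcal{P}_1,\dots,\mathcal{P}_n)$ consists of a set $S$ of states and, for each agent $i$, a partition $\mathcal{P}_i$ of $S$; $\mathcal{P}_i(s)$ denotes the block of $\mathcal{P}_i$ containing $s$. Events are subsets of $S$. Define $K_i(e)=\{s\in S: \mathcal{P}_i(s)\subseteq e\}$ and $D_I(e)=\{s\in S : \bigcap_{i\in I}\mathcal{P}_i(s)\subseteq e\}$ (with the intersection over the empty family taken to be $S$). The induced structure $\mathbf{C}(\mathcal{A})$ has constraints $\mathcal{P}(S)$ ordered by $e_1\sqsubseteq e_2$ iff $e_2\subseteq e_1$ (so join is intersection, bottom is $S$, top is $\emptyset$), and agent $i$'s function is $K_i$. In a complete lattice $(\mathrm{Con},\sqsubseteq)$ a space function is a self-map preserving joins of directed sets, binary joins and the bottom; for a family of space functions $(s_i)_{i\in G}$, the distributed space of $I\subseteq G$ is $\Delta_I=\max\{f \text{ space function}: f(c)\sqsubseteq s_i(c) \text{ for all } c \text{ and all } i\in I\}$ (this maximum exists). *)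

(* Defs.v *)
From mathcomp Require Import all_boot.
From mathcomp Require Import boolp classical_sets.
Set Implicit Arguments. Unset Strict Implicit. Unset Printing Implicit Defensive.
Local Open Scope classical_set_scope.

(* A partition of the state type S, presented by the map s |-> P(s)
   (the block containing s): every state lies in its block, and any
   state of a block has that same block.  The blocks {P s | s} then form
   exactly a partition of S. *)
Definition is_partition_fun (S : Type) (P : S -> set S) : Prop :=
  (forall s, P s s) /\ (forall s t, P s t -> P t = P s).

Definition Kop (S : Type) (P : S -> set S) (e : set S) : set S :=
  [set s | P s `<=` e].

(* Distributed knowledge D_I(e) = {s | ⋂_{i∈I} P_i(s) ⊆ e}
   (empty intersection = S). *)
Definition Dop (S : Type) (n : nat) (P : 'I_n -> S -> set S) (I : set 'I_n)
  (e : set S) : set S :=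
  [set s | \bigcap_(i in I) P i s `<=` e].

Definition sqle (S : Type) (e1 e2 : set S) : Prop := e2 `<=` e1.

Definition directed (S : Type) (D : set (set S)) : Prop :=
  (exists d, D d) /\
  (forall a b, D a -> D b -> exists2 c, D c & sqle a c /\ sqle b c).

(* Space function on (P(S), ⊑): joins are intersections, bottom is S. *)
Definition space_function (S : Type) (f : set S -> set S) : Prop :=
  (forall D : set (set S), directed D ->
     f (\bigcap_(d in D) d) = \bigcap_(d in D) f d) /\
  (forall a b, f (a `&` b) = f a `&` f b) /\
  f setT = setT.

Definition is_distributed_space (S : Type) (n : nat)
  (s : 'I_n -> set S -> set S) (I : set 'I_n) (f : set S -> set S) : Prop :=
  [/\ space_function f,
      (forall c i, I i -> sqle (f c) (s i c)) &
      (forall g, space_function g ->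
         (forall c i, I i -> sqle (g c) (s i c)) ->
         forall c, sqle (g c) (f c))].

(* Main.v *)
Require Import Defs.
From mathcomp Require Import all_boot.
From mathcomp Require Import boolp classical_sets.
Local Open Scope classical_set_scope.

Theorem mainTheorem8 (S : Type) (n : nat) (P : 'I_n -> S -> set S)
  (HP : forall i, is_partition_fun (P i)) (I : set 'I_n) :
  is_distributed_space (fun i => Kop (P i)) I (Dop P I).
Proof.
split.
- split; [|split].
  + move=> D _; apply/seteqP; split => s /=.
    * move=> Hs d Dd x Hx; exact: (Hs x Hx d Dd).
    * move=> Hs x Hx d Dd; exact: (Hs d Dd x Hx).
  + move=> a b; apply/seteqP; split => s /=.
    * by move=> Hs; split => x Hx; case: (Hs x Hx).
    * by move=> [Ha Hb] x Hx; split; [apply: Ha|apply: Hb].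
  + by apply/seteqP; split => s //= _ x _.
- move=> c i Ii s /= Hs x Hx; apply: Hs; exact: (Hx i Ii).
- move=> g [gD [gI gT]] Hg c s /= Hs.
  pose D := [set d | c `<=` d /\ g d s].
  have DD : directed D.
    split; first by exists setT; split => //; rewrite gT.
    move=> a b [ca ga] [cb gb]; exists (a `&` b).
      split; first by move=> x Hx; split; [apply: ca|apply: cb].
      by rewrite gI.
    by split => x [].
  have Dc : \bigcap_(d in D) d = c.
    apply/seteqP; split => t /=; last by move=> Ht d [cd _]; exact: cd.
    move=> Ht; apply: contrapT => ct.
    have [i [Ii Pit]] : exists i, I i /\ ~ P i s t.
      apply: contrapT => H; apply: ct; apply: Hs => j Ij.
      apply: contrapT => Hj; apply: H; by exists j.
    have : D [set t' | t' <> t].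
      split; first by move=> x cx xt; subst; exact: ct.
      apply: (Hg _ i Ii) => x Hx xt; subst; exact: Pit.
    move=> /Ht; exact.
  have := gD D DD; rewrite Dc => ->.
  by move=> d [].
Qed.
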